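(* Let $R$ be a (unital, not necessarily associative) ring and let $\sigma\colon R\to R$ be an additive bijection with $\sigma(1)=1$. If $R$ is left Noetherian, then the non-associative skew Laurent polynomial ring $R[X^{\pm};\sigma]$ is left Noetherian. Likewise, if $R$ is right Noetherian, then $R[X^{\pm};\sigma]$ is right Noetherian.
   Context: All rings are unital but not necessarily associative. A left (right) ideal of a non-associative ring $S$ is an additive subgroup $I$ with $sI\subseteq I$ ($Is\subseteq I$) for all $s\in S$. $S$ is left (right) Noetherian if it satisfies the ascending chain condition on left (right) ideals. For a non-associative ring $R$ and an additive bijection $\sigma\colon R\to R$ with $\sigma(1)=1$, the non-associative skew Laurent polynomial ring $R[X^{\pm};\sigma]$ is the additive group of formal sums $\sum_{i\in\mathbb{Z}} r_iX^i$ with $r_i\in R$, all but finitely many zero, with pointwise addition and multiplication given by the biadditive extension of $(rX^m)(sX^n)=(r\sigma^m(s))X^{m+n}$ for $r,s\in R$, $m,n\in\mathbb{Z}$ (here $\sigma^m$ for $m<0$ denotes a power of $\sigma^{-1}$). *)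

(* Defs.v *)
From mathcomp Require Import all_boot all_order all_algebra.
From mathcomp Require Import boolp classical_sets fsbigop.
Set Implicit Arguments. Unset Strict Implicit. Unset Printing Implicit Defensive.
Import GRing.Theory.
Local Open Scope classical_set_scope.
Local Open Scope ring_scope.

Definition nonassoc_ring (R : zmodType) (mul : R -> R -> R) (one : R) : Prop :=
  [/\ left_distributive mul +%R, right_distributive mul +%R,
      left_id one mul & right_id one mul].

Section Generic.
Variables (T : Type) (C : T -> Prop) (zero : T) (add : T -> T -> T)
          (opp : T -> T) (mul : T -> T -> T).

Definition additive_subgroup (I : T -> Prop) : Prop :=
  [/\ forall x, I x -> C x, I zero,
      forall x y, I x -> I y -> I (add x y) & forall x, I x -> I (opp x)].

Definition left_ideal (I : T -> Prop) : Prop :=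
  additive_subgroup I /\ forall s x, C s -> I x -> I (mul s x).

Definition right_ideal (I : T -> Prop) : Prop :=
  additive_subgroup I /\ forall s x, C s -> I x -> I (mul x s).

Definition acc_on (ideal : (T -> Prop) -> Prop) : Prop :=
  forall I : nat -> T -> Prop,
    (forall n, ideal (I n)) -> (forall n x, I n x -> I n.+1 x) ->
    exists N : nat, forall n, (N <= n)%N -> forall x, I n x <-> I N x.

Definition left_noetherian := acc_on left_ideal.
Definition right_noetherian := acc_on right_ideal.
End Generic.

Definition ring_left_noetherian (R : zmodType) (mul : R -> R -> R) : Prop :=
  left_noetherian (fun _ : R => True) 0 +%R (fun x => - x) mul.
Definition ring_right_noetherian (R : zmodType) (mul : R -> R -> R) : Prop :=
  right_noetherian (fun _ : R => True) 0 +%R (fun x => - x) mul.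

Section Laurent.
Variables (R : zmodType) (mul : R -> R -> R) (sigma sigmainv : R -> R).

Definition spow (m : int) : R -> R :=
  match m with
  | Posz n => iter n sigma
  | Negz n => iter n.+1 sigmainv
  end.

(* an element sum_i r_i X^i is its coefficient function i |-> r_i,
   required to have finite support *)
Definition fin_supp (f : int -> R) : Prop :=
  exists N : nat, forall i : int, (N < `|i|)%N -> f i = 0.

Definition ladd (f g : int -> R) : int -> R := fun i => f i + g i.
Definition lopp (f : int -> R) : int -> R := fun i => - f i.
Definition lzero : int -> R := fun _ => 0.

(* (r X^m)(s X^n) = (r sigma^m(s)) X^(m+n), extended biadditively:
   coefficient of X^k in f*g is sum_m f_m sigma^m(g_(k-m)) *)
Definition lmul (f g : int -> R) : int -> R :=
  fun k => \sum_(m \in [set: int]) mul (f m) (spow m (g (k - m))).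

Definition laurent_left_noetherian : Prop :=
  left_noetherian fin_supp lzero ladd lopp lmul.
Definition laurent_right_noetherian : Prop :=
  right_noetherian fin_supp lzero ladd lopp lmul.
End Laurent.

(* Main.v *)
Require Import Defs.
From mathcomp Require Import all_boot all_order all_algebra.
From mathcomp Require Import boolp classical_sets fsbigop.
From mathcomp Require Import zify.
Set Implicit Arguments. Unset Strict Implicit. Unset Printing Implicit Defensive.
Import GRing.Theory.
Local Open Scope classical_set_scope.
Local Open Scope ring_scope.

Section Gen.
Variables (R : zmodType) (Rideal : (R -> Prop) -> Prop)
  (ideal : ((int -> R) -> Prop) -> Prop) (phi : int -> R -> R).
Hypothesis Hacc : acc_on Rideal.
Hypothesis Hfs : forall J f, ideal J -> J f -> fin_supp f.
Hypothesis H0 : forall J, ideal J -> J (@lzero R).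
Hypothesis HD : forall J f g, ideal J -> J f -> J g -> J (ladd f g).
Hypothesis HN : forall J f, ideal J -> J f -> J (lopp f).
Hypothesis Hsh : forall J f k, ideal J -> J f -> J (fun i => phi k (f (i - k))).
Hypothesis HphiK : forall k x, phi k (phi (- k) x) = x.
Hypothesis Hphi0 : forall k, phi k 0 = 0.

Definition Lset (J : (int -> R) -> Prop) (n : nat) : R -> Prop :=
  fun x => exists g, J g /\ (forall i : int, (0 < i) \/ (i < - n%:Z) -> g i = 0)
                     /\ g 0 = x.

Hypothesis HL : forall J n, ideal J -> Rideal (Lset J n).

Lemma Lmono J J' n n' x : (forall f, J f -> J' f) -> (n <= n')%N ->
  Lset J n x -> Lset J' n' x.
Proof.
move=> sub le [g [Jg [sg g0]]]; exists g; split; first exact: sub.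
split=> // i hi; apply: sg; lia.
Qed.

Lemma reduce J J' : ideal J -> ideal J' -> (forall f, J f -> J' f) ->
  (forall n x, Lset J' n x -> Lset J n x) -> forall f, J' f -> J f.
Proof.
move=> iJ iJ' sub hL.
have Q : forall n d, J' d -> (forall i : int, (0 <= i) \/ (i < - n%:Z) -> d i = 0) -> J d.
  elim=> [|n IH] d Jd sd.
    have -> : d = @lzero R by apply/funext => i; apply: sd; lia.
    exact: H0.
  pose e := fun i => phi 1 (d (i - 1)).
  have Je : J' e := @Hsh J' d 1 iJ' Jd.
  have se : forall i : int, (0 < i) \/ (i < - n%:Z) -> e i = 0.
    move=> i hi; rewrite /e sd ?Hphi0 //; lia.
  have [h [Jh [sh h0]]] := hL n (e 0) (ex_intro _ e (conj Je (conj se erefl))).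
  have Je' : J (ladd e (lopp h)).
    apply: (IH (ladd e (lopp h))); first by apply: HD => //; apply: HN => //; exact: sub.
    move=> i hi; rewrite /ladd /lopp.
    have [->|i0] := eqVneq i 0; first by rewrite h0 subrr.
    by rewrite se ?sh ?subrr //; lia.
  have JE : J e.
    have -> : e = ladd (ladd e (lopp h)) h.
      by apply/funext => i; rewrite /ladd /lopp subrK.
    exact: HD.
  have -> : d = (fun i => phi (-1) (e (i - -1))).
    by apply/funext => i; rewrite /e opprK addrK HphiK.
  exact: Hsh.
move=> f Jf; have [N hN] := Hfs iJ' Jf.
pose g := fun i => phi (- (N.+1)%:Z) (f (i - - (N.+1)%:Z)).
have Jg : J g.
  apply: (Q (N + N).+1 g); first exact: (@Hsh J' f _ iJ' Jf).
  move=> i hi; rewrite /g hN ?Hphi0 //; lia.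
have -> : f = (fun i => phi (N.+1)%:Z (g (i - (N.+1)%:Z))).
  by apply/funext => i; rewrite /g opprK subrK HphiK.
exact: Hsh.
Qed.

Lemma gen_acc : acc_on ideal.
Proof.
move=> J hJ hinc.
have monod : forall k d f, J k f -> J (k + d)%N f.
  by move=> k; elim=> [|d IH] f Jf; rewrite ?addn0 // addnS; apply: hinc; apply: IH.
have mono : forall k k' f, (k <= k')%N -> J k f -> J k' f.
  by move=> k k' f le Jf; rewrite -(subnKC le); apply: monod.
have [m hm] := Hacc (fun j => @HL (J j) j (hJ j))
  (fun j x => Lmono (fun f => hinc j f) (leqnSn j)).
have stab : forall n, exists N, forall k, (N <= k)%N -> forall x,
    Lset (J k) n x <-> Lset (J N) n x.
  move=> n; exact: (Hacc (fun k => @HL (J k) n (hJ k))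
    (fun k x => Lmono (fun f => hinc k f) (leqnn n))).
have all : forall m0, exists M, forall n, (n < m0)%N -> forall k, (M <= k)%N ->
    forall x, Lset (J k) n x -> Lset (J M) n x.
  elim=> [|m0 [M HM]]; first by exists 0%N.
  have [Nm HNm] := stab m0.
  exists (maxn M Nm) => n hn k hk x hx.
  have [lt|eq] : (n < m0)%N \/ n = m0 by lia.
    apply: (Lmono (n := n) (fun f => mono _ _ f (leq_maxl M Nm))) => //.
    by apply: (HM n lt k) => //; lia.
  subst n; have hk2 : (Nm <= k)%N by lia.
  apply: (@Lmono (J Nm) _ m0 m0 x (fun f => mono _ _ f (leq_maxr M Nm)) (leqnn _)).
  exact: (proj1 (HNm k hk2 x) hx).
have [M HM] := all m.
exists (maxn m M) => n hn x; split; last by apply: mono.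
apply: reduce => //; first by move=> f; apply: mono.
move=> n0 y hy.
have [lt|ge] : (n0 < m)%N \/ (m <= n0)%N by lia.
  apply: (Lmono (n := n0) (fun f => mono _ _ f (leq_maxr m M))) => //.
  by apply: (HM n0 lt n) => //; lia.
have h1 : Lset (J (maxn n0 n)) (maxn n0 n) y.
  exact: (@Lmono (J n) _ n0 (maxn n0 n) y (fun f => mono _ _ f (leq_maxr n0 n)) (leq_maxl _ _) hy).
have h2 := (proj1 (hm (maxn n0 n) ltac:(lia) y)) h1.
exact: (@Lmono (J m) _ m n0 y (fun f => mono _ _ f (leq_maxl m M)) ge h2).
Qed.
End Gen.

Lemma fsum_single (R: zmodType) (F : int -> R) p :
  (forall m, m != p -> F m = 0) -> \sum_(m \in [set: int]) F m = F p.
Proof.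
move=> H; rewrite -(fsbig_widen [set p]) //= ?fsbig_set1 // => m [_ /= mp].
by apply: H; apply/eqP.
Qed.

Section Concrete.
Variables (R : zmodType) (mul : R -> R -> R) (one : R) (sigma sigmainv : R -> R).
Hypothesis Hr : nonassoc_ring mul one.
Hypothesis Hs : {morph sigma : x y / x + y}.
Hypothesis HK1 : cancel sigma sigmainv.
Hypothesis HK2 : cancel sigmainv sigma.
Hypothesis H1 : sigma one = one.

Lemma mul0x x : mul 0 x = 0.
Proof.
case: Hr => hl _ _ _; apply: (@addrI _ (mul 0 x)).
by rewrite -hl !addr0.
Qed.
Lemma mulx0 x : mul x 0 = 0.
Proof.
case: Hr => _ hr _ _; apply: (@addrI _ (mul x 0)).
by rewrite -hr !addr0.
Qed.
Lemma mul1x x : mul one x = x. Proof. by case: Hr. Qed.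
Lemma mulx1 x : mul x one = x. Proof. by case: Hr. Qed.

Lemma sigma0 : sigma 0 = 0.
Proof.
have h := Hs 0 0; rewrite addr0 in h.
by have := congr1 (fun z => z - sigma 0) h; rewrite /= subrr addrK.
Qed.
Lemma sigmainv0 : sigmainv 0 = 0.
Proof. by rewrite -{1}sigma0 HK1. Qed.
Lemma sigmainv1 : sigmainv one = one.
Proof. by rewrite -{1}H1 HK1. Qed.

Lemma iter0 (f : R -> R) n : f 0 = 0 -> iter n f 0 = 0.
Proof. by move=> h; elim: n => //= n ->. Qed.
Lemma iter1 (f : R -> R) n : f one = one -> iter n f one = one.
Proof. by move=> h; elim: n => //= n ->. Qed.
Lemma iterK (f g : R -> R) n x : cancel g f -> iter n f (iter n g x) = x.
Proof.
move=> c; elim: n x => // n IH x.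
by rewrite iterSr iterS c IH.
Qed.

Notation sp := (spow sigma sigmainv).

Lemma spowE k : sp k = if (0 <= k)%R then iter `|k|%N sigma else iter `|k|%N sigmainv.
Proof. by case: k. Qed.

Lemma spow0 k : sp k 0 = 0.
Proof. rewrite spowE; case: ifP => _; apply: iter0; [exact: sigma0|exact: sigmainv0]. Qed.
Lemma spow1 k : sp k one = one.
Proof. rewrite spowE; case: ifP => _; apply: iter1; [exact: H1|exact: sigmainv1]. Qed.
Lemma spowK k x : sp k (sp (- k) x) = x.
Proof.
rewrite !spowE abszN.
have [->|k0] := eqVneq k 0; first by [].
have [hk|hk] : (0 <= k /\ ~~ (0 <= - k)) \/ (~~ (0 <= k) /\ 0 <= - k) by lia.
  by case: hk => -> /negbTE ->; apply: iterK.
by case: hk => /negbTE -> ->; apply: iterK.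
Qed.

Definition mono (r : R) (p : int) : int -> R := fun i => if i == p then r else 0.

Lemma mono_fs r p : fin_supp (mono r p).
Proof.
exists `|p|%N => i hi; rewrite /mono; case: eqP => // e; subst; lia.
Qed.

Lemma lmul_monol r p g :
  lmul mul sigma sigmainv (mono r p) g = fun i => mul r (sp p (g (i - p))).
Proof.
apply/funext => i; rewrite /lmul (fsum_single (p := p)) /mono ?eqxx // => m /negbTE ->.
exact: mul0x.
Qed.

Lemma lmul_monor r p g :
  lmul mul sigma sigmainv g (mono r p) = fun i => mul (g (i - p)) (sp (i - p) r).
Proof.
apply/funext => i; rewrite /lmul (fsum_single (p := i - p)) /mono.
  have -> : i - (i - p) = p by lia.
  by rewrite eqxx.
move=> m mp; have -> : (i - m == p) = false by apply/negbTE; apply: contra mp => /eqP <-; apply/eqP; lia.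
by rewrite spow0 mulx0.
Qed.


Lemma lmul_monol1 p g :
  lmul mul sigma sigmainv (mono one p) g = fun i => sp p (g (i - p)).
Proof. by rewrite lmul_monol; apply/funext => i; rewrite mul1x. Qed.
Lemma lmul_monor1 p g :
  lmul mul sigma sigmainv g (mono one p) = fun i => g (i - p).
Proof. by rewrite lmul_monor; apply/funext => i; rewrite spow1 mulx1. Qed.

Lemma main_left : ring_left_noetherian mul -> laurent_left_noetherian mul sigma sigmainv.
Proof.
move=> hR.
apply: (gen_acc (phi := sp) hR).
- by move=> J f [[hC _ _ _] _]; exact: hC.
- by move=> J [[_ h0 _ _] _].
- by move=> J f g [[_ _ hA _] _]; exact: hA.
- by move=> J f [[_ _ _ hN] _]; exact: hN.
- move=> J f k [_ hM] Jf.
  by have := hM (mono one k) f (mono_fs one k) Jf; rewrite lmul_monol1.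
- exact: spowK.
- exact: spow0.
move=> J n [[hC h0 hA hN] hM]; split; [split|].
- by [].
- by exists (lzero R); split=> //; split.
- move=> x y [g [Jg [sg <-]]] [h [Jh [sh <-]]]; exists (ladd g h); split; first exact: hA.
  by split=> // i hi; rewrite /ladd sg ?sh ?addr0.
- move=> x [g [Jg [sg <-]]]; exists (lopp g); split; first exact: hN.
  by split=> // i hi; rewrite /lopp sg ?oppr0.
- move=> r x _ [g [Jg [sg <-]]]; exists (lmul mul sigma sigmainv (mono r 0) g).
  split; first exact: hM (mono_fs r 0) Jg.
  rewrite lmul_monol; split=> [i hi|] /=; rewrite subr0 //.
  by rewrite sg ?mulx0.
Qed.

Lemma main_right : ring_right_noetherian mul -> laurent_right_noetherian mul sigma sigmainv.
Proof.
move=> hR.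
apply: (gen_acc (phi := fun _ x => x) hR).
- by move=> J f [[hC _ _ _] _]; exact: hC.
- by move=> J [[_ h0 _ _] _].
- by move=> J f g [[_ _ hA _] _]; exact: hA.
- by move=> J f [[_ _ _ hN] _]; exact: hN.
- move=> J f k [_ hM] Jf.
  by have := hM (mono one k) f (mono_fs one k) Jf; rewrite lmul_monor1.
- by [].
- by [].
move=> J n [[hC h0 hA hN] hM]; split; [split|].
- by [].
- by exists (lzero R); split=> //; split.
- move=> x y [g [Jg [sg <-]]] [h [Jh [sh <-]]]; exists (ladd g h); split; first exact: hA.
  by split=> // i hi; rewrite /ladd sg ?sh ?addr0.
- move=> x [g [Jg [sg <-]]]; exists (lopp g); split; first exact: hN.
  by split=> // i hi; rewrite /lopp sg ?oppr0.
- move=> r x _ [g [Jg [sg <-]]]; exists (lmul mul sigma sigmainv g (mono r 0)).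
  split; first exact: hM (mono_fs r 0) Jg.
  rewrite lmul_monor; split=> [i hi|] /=; rewrite subr0 //.
  by rewrite sg ?mul0x.
Qed.

End Concrete.

Theorem theorem6 (R : zmodType) (mul : R -> R -> R) (one : R)
    (sigma sigmainv : R -> R) :
  nonassoc_ring mul one ->
  {morph sigma : x y / x + y} ->
  cancel sigma sigmainv -> cancel sigmainv sigma ->
  sigma one = one ->
  (ring_left_noetherian mul -> laurent_left_noetherian mul sigma sigmainv) /\
  (ring_right_noetherian mul -> laurent_right_noetherian mul sigma sigmainv).
Proof.
move=> Hr Hs K1 K2 H1; split.
  by apply: main_left; [exact: Hr|exact: Hs|exact: K1|exact: K2].
by apply: main_right; eassumption.
Qed.
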